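(* Let $k=\mathbb{F}_3$, equip $k^7$ with the bilinear form $\langle x,y\rangle=x_1y_7+x_2y_6+\dots+x_7y_1$, let $SO_7$ be the corresponding special orthogonal group and $B\subset SO_7$ the Borel subgroup of upper triangular matrices in $SO_7$. Let $A$ be a $7\times7$ matrix over $k$ self-adjoint for this form, and let \[ X_A(k)=\{gB(k)\in SO_7(k)/B(k):\ M=g^{-1}Ag \text{ satisfies } M_{ij}=0 \text{ for all } (i,j)\in P\}, \] where $P=\{(3,1),(4,1),(5,1),(5,2),(6,1),(6,2),(6,3),(7,1),(7,2),(7,3),(7,4),(7,5)\}$. If there is no nonzero $v\in k^7$ such that $\langle v,v\rangle=\langle v,Av\rangle=\langle Av,Av\rangle=\langle Av,A^2v\rangle=0$ and $\langle A^2v,A^2v\rangle$ is a square in $k$, then $X_A(k)=\emptyset$.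
   Context: $M_{ij}$ denotes the entry in row $i$ and column $j$. The defining condition of $X_A(k)$ is invariant under right multiplication of $g$ by $B(k)$, so $X_A(k)$ is well defined. *)

(* Defs.v *)
From HB Require Import structures.
From mathcomp Require Import all_boot all_order all_algebra.
Set Implicit Arguments. Unset Strict Implicit. Unset Printing Implicit Defensive.
Import GRing.Theory.
Local Open Scope ring_scope.

Notation k := ('F_3).
Notation vec := ('cV[k]_7).
Notation mat := ('M[k]_7).

(* <x,y> = x_1 y_7 + x_2 y_6 + ... + x_7 y_1 (0-based: i pairs with 6 - i) *)
Definition bform (x y : vec) : k := \sum_(i < 7) x i 0 * y (rev_ord i) 0.

Definition self_adjoint (A : mat) : Prop :=
  forall x y : vec, bform (A *m x) y = bform x (A *m y).

Definition SO7 : {set mat} :=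
  [set g : mat | [forall x : vec, forall y : vec, bform (g *m x) (g *m y) == bform x y]
                 && (\det g == 1)].

Definition Bor : {set mat} :=
  [set b in SO7 | [forall i : 'I_7, forall j : 'I_7, (j < i)%N ==> (b i j == 0)]].

(* The pattern P, with 1-based indices as in the paper *)
Definition inP (i j : nat) : bool :=
  (i, j) \in [:: (3,1); (4,1); (5,1); (5,2); (6,1); (6,2); (6,3);
                 (7,1); (7,2); (7,3); (7,4); (7,5)]%N.

Definition cond (A g : mat) : bool :=
  let M := invmx g *m A *m g in
  [forall i : 'I_7, forall j : 'I_7, inP i.+1 j.+1 ==> (M i j == 0)].

Definition lcoset (g : mat) : {set mat} := [set g *m b | b in Bor].

Definition XA (A : mat) : {set {set mat}} :=
  [set lcoset g | g in SO7 & cond A g].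

Definition is_square (a : k) : Prop := exists c : k, a = c * c.

(* Main.v *)
Require Import Defs.
From mathcomp Require Import all_boot all_order all_algebra.
Set Implicit Arguments. Unset Strict Implicit. Unset Printing Implicit Defensive.
Import GRing.Theory.
Local Open Scope ring_scope.

Lemma zl (a b : 'F_3) : a = 0 -> a * b = 0. Proof. by move=> ->; rewrite mul0r. Qed.
Lemma zr (a b : 'F_3) : b = 0 -> a * b = 0. Proof. by move=> ->; rewrite mulr0. Qed.
Ltac kill z := first [by apply: zl; apply: z | by apply: zr; apply: z].
Ltac killall ez uz wz := first [kill ez | kill uz | kill wz].

Theorem mainTheorem10 (A : 'M['F_3]_7) :
  self_adjoint A ->
  ~ (exists v : 'cV['F_3]_7,
        [/\ v != 0, bform v v = 0, bform v (A *m v) = 0,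
            bform (A *m v) (A *m v) = 0 /\ bform (A *m v) (A *m A *m v) = 0
          & is_square (bform (A *m A *m v) (A *m A *m v))]) ->
  XA A = set0.
Proof.
move=> _ Hno; apply/eqP; rewrite -subset0; apply/subsetP => C /imsetP [g].
rewrite inE => /andP [gS hc] _; exfalso; apply: Hno.
move: gS; rewrite inE => /andP [/forallP hf /eqP hdet].
have hg : forall x y, bform (g *m x) (g *m y) = bform x y.
  by move=> x y; apply/eqP; move/forallP: (hf x); apply.
have gU : g \in unitmx by rewrite unitmxE hdet unitr1.
set M := invmx g *m A *m g.
have hz : forall i j : 'I_7, inP i.+1 j.+1 -> M i j = 0.
  move=> i j H; move: hc; rewrite /cond => /forallP /(_ i) /forallP /(_ j).
  by rewrite H => /eqP.
have AgM : A *m g = g *m M by rewrite /M !mulmxA mulmxV // mul1mx.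
set e : 'cV['F_3]_7 := delta_mx 0 0.
set u := M *m e.
set w := M *m u.
have uE : forall i, u i 0 = M i 0 by move=> i; rewrite /u /e -colE mxE.
have uz : forall i : 'I_7, (2 <= i)%N -> u i 0 = 0.
  move=> i Hi; rewrite uE hz //.
  by case: i Hi => [[|[|[|[|[|[|[|i]]]]]]] Hi].
have wz : forall i : 'I_7, (4 <= i)%N -> w i 0 = 0.
  move=> i Hi; rewrite /w mxE big1 // => j _.
  case: i Hi => [[|[|[|[|[|[|[|i]]]]]]] Hi0] //= _;
  case: j => [[|[|[|[|[|[|[|j]]]]]]] Hj] //;
  first [by rewrite uz // mulr0 | by rewrite hz // mul0r].
have ez : forall i : 'I_7, (1 <= i)%N -> e i 0 = 0.
  by move=> i Hi; rewrite /e mxE; case: i Hi => [[|i] Hi].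
exists (g *m e).
have Av : A *m (g *m e) = g *m u by rewrite mulmxA AgM -mulmxA.
have AAv : A *m A *m (g *m e) = g *m w.
  by rewrite -mulmxA Av mulmxA AgM -mulmxA.
have e0 : e 0 0 = 1 by rewrite /e mxE.
clearbody w u e M.
rewrite Av AAv !hg.
split.
- apply/negP => /eqP H.
  have : e = 0 by rewrite -(mul1mx e) -(mulVmx gU) -mulmxA H mulmx0.
  by move/matrixP => /(_ 0 0); rewrite e0 mxE.
- rewrite /bform big1 // => i _.
  case: i => [[|[|[|[|[|[|[|i]]]]]]] Hi] //; killall ez uz wz.
- rewrite /bform big1 // => i _.
  case: i => [[|[|[|[|[|[|[|i]]]]]]] Hi] //; killall ez uz wz.
- split.
  + rewrite /bform big1 // => i _.
    case: i => [[|[|[|[|[|[|[|i]]]]]]] Hi] //; killall ez uz wz.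
  + rewrite /bform big1 // => i _.
    case: i => [[|[|[|[|[|[|[|i]]]]]]] Hi] //; killall ez uz wz.
- exists (w (inord 3) 0).
  rewrite /bform (bigD1 (inord 3)) //= big1 ?addr0.
    have -> : rev_ord (inord 3 : 'I_7) = inord 3 by apply/val_inj; rewrite /= inordK.
    by [].
  move=> i Hi.
  case: i Hi => [[|[|[|[|[|[|[|i]]]]]]] Hi] Hne //; try killall ez uz wz.
  by exfalso; move/eqP: Hne; apply; apply/val_inj; rewrite /= inordK.
Qed.
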